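(* Let $k$ be an algebraically closed field of characteristic $p\ge0$, $n\ge1$, and let $\pi : \mathrm{GL}(n,k)\to\mathrm{PGL}(n,k)$ be the natural surjection. Let $\theta_i : \mathbb{G}_a\to\mathrm{PGL}(n,k)$ $(i=1,2)$ be homomorphisms of algebraic groups and $\varphi_i : \mathbb{G}_a\to\mathrm{GL}(n,k)$ $(i=1,2)$ homomorphisms of algebraic groups with $\theta_i = \pi\circ\varphi_i$. Then the following are equivalent: (1) $\theta_1$ and $\theta_2$ are equivalent, i.e. there exists $P\in\mathrm{GL}(n,k)$ with $\theta_2(t) = [P]\,\theta_1(t)\,[P]^{-1}$ for all $t\in\mathbb{G}_a$; (2) $\varphi_1$ and $\varphi_2$ are equivalent, i.e. there exists $Q\in\mathrm{GL}(n,k)$ with $\varphi_2(t) = Q\,\varphi_1(t)\,Q^{-1}$ for all $t\in\mathbb{G}_a$.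
   Context: $\mathbb{G}_a$ denotes the additive group of $k$; $[P] = \pi(P)$ denotes the class of $P$ in $\mathrm{PGL}(n,k)$. *)

(* Defs.v *)
From HB Require Import structures.
From mathcomp Require Import all_boot all_order all_algebra.
Set Implicit Arguments. Unset Strict Implicit. Unset Printing Implicit Defensive.
Import GRing.Theory.
Local Open Scope ring_scope.

(* A morphism of varieties G_a = A^1 -> M_n(k) is a matrix of polynomials
   in one variable t; [mx_eval Phi t] is its value at t \in k. *)
Definition mx_eval (k : fieldType) (n : nat) (Phi : 'M[{poly k}]_n) (t : k)
  : 'M[k]_n := map_mx (fun p => p.[t]) Phi.

(* Homomorphism of algebraic groups G_a -> GL(n,k): a polynomial matrix
   map with phi(0) = I and phi(s+t) = phi(s) phi(t)
   (invertibility then follows: phi(t) phi(-t) = I). *)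
Definition Ga_hom_GL (k : fieldType) (n : nat) (Phi : 'M[{poly k}]_n) : Prop :=
  mx_eval Phi 0 = 1%:M /\
  forall s t : k, mx_eval Phi (s + t) = mx_eval Phi s *m mx_eval Phi t.

Definition pgl_eq (k : fieldType) (n : nat) (A B : 'M[k]_n) : Prop :=
  exists c : k, c != 0 /\ A = c *: B.

(* Main.v *)
Require Import Defs.
From mathcomp Require Import all_boot all_order all_algebra.
Import GRing.Theory.
Set Implicit Arguments. Unset Strict Implicit.
Local Open Scope ring_scope.

Lemma mx_evalE (k : fieldType) n (Phi : 'M[{poly k}]_n) t :
  mx_eval Phi t = map_mx (horner_eval t) Phi.
Proof. by []. Qed.

Lemma det_eval (k : fieldType) n (Phi : 'M[{poly k}]_n) t :
  \det (mx_eval Phi t) = (\det Phi).[t].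
Proof. by rewrite mx_evalE det_map_mx. Qed.

Lemma poly_nonzero_pt (k : closedFieldType) (p : {poly k}) :
  p != 0 -> exists x, p.[x] != 0.
Proof.
move=> p0.
have [s1|s1] := eqVneq (size p) 1%N.
  exists 0; move: p0; rewrite (size1_polyC (eq_leq s1)) hornerC.
  by rewrite polyC_eq0.
have : size (p - 1) != 1%N.
  rewrite size_addl ?size_opp ?size_poly1 //.
  by rewrite ltn_neqAle eq_sym s1 /= size_poly_gt0.
move/closed_rootP => [x /rootP]; rewrite hornerD hornerN hornerC => /eqP.
rewrite subr_eq0 => /eqP px; exists x; rewrite px; exact: oner_neq0.
Qed.

Lemma det_hom (k : closedFieldType) n (Phi : 'M[{poly k}]_n) :
  Ga_hom_GL Phi -> forall t, \det (mx_eval Phi t) = 1.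
Proof.
move=> [h0 hM] t; set D := \det Phi.
have D0 : D.[0] = 1 by rewrite /D -det_eval h0 det1.
have DM s u : D.[s + u] = D.[s] * D.[u] by rewrite /D -!det_eval hM det_mulmx.
have [s1|] := eqVneq (size D) 1%N.
  by rewrite det_eval -/D -D0 (size1_polyC (eq_leq s1)) !hornerC.
move/closed_rootP => [x /rootP Dx].
by move: (DM x (- x)); rewrite subrr D0 Dx mul0r => /eqP; rewrite oner_eq0.
Qed.

Lemma key (k : closedFieldType) n (Phi Psi : 'M[{poly k}]_n.+1) :
  Ga_hom_GL Phi -> Ga_hom_GL Psi ->
  (forall t, pgl_eq (mx_eval Psi t) (mx_eval Phi t)) ->
  forall t, mx_eval Psi t = mx_eval Phi t.
Proof.
move=> hPhi hPsi H.
have ex t : exists c, (c != 0) && (mx_eval Psi t == c *: mx_eval Phi t).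
  by have [c [c0 e]] := H t; exists c; rewrite c0 e eqxx.
pose c t := xchoose (ex t).
have cP t : mx_eval Psi t = c t *: mx_eval Phi t.
  by have /andP[_ /eqP] := xchooseP (ex t).
have Phi_nz t : mx_eval Phi t != 0.
  apply/eqP => e; have := det_hom hPhi t; rewrite e det0 => /eqP.
  by rewrite eq_sym oner_eq0.
have cM s u : c (s + u) = c s * c u.
  have := cP (s + u); rewrite hPsi.2 !cP -scalemxAl -scalemxAr scalerA -hPhi.2.
  move/eqP; rewrite -subr_eq0 -scalerBl scaler_eq0 (negbTE (Phi_nz _)) orbF.
  by rewrite subr_eq0 => /eqP ->.
have cn t : c t ^+ n.+1 = 1.
  by have := det_hom hPsi t; rewrite cP detZ det_hom // mulr1.
have [s Xs] := closed_field_poly_normal ('X^(n.+1) - 1 : {poly k}).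
have cs t : c t \in s.
  rewrite -root_prod_XsubC; apply/rootP.
  have := f_equal (horner^~ (c t)) Xs; rewrite hornerZ.
  rewrite hornerD hornerN hornerXn cn hornerC subrr => /esym /eqP.
  rewrite mulf_eq0 lead_coef_eq0 => /orP[/eqP e|/eqP //].
  by move: (f_equal (horner^~ 0) e); rewrite hornerD hornerN hornerXn hornerC expr0n /= sub0r horner0 => /eqP; rewrite oppr_eq0 oner_eq0.
pose a := Phi ord0 ord0; pose b := Psi ord0 ord0.
have ab t : b.[t] = c t * a.[t].
  by have := congr1 (fun M : 'M[k]_n.+1 => M ord0 ord0) (cP t); rewrite /= mxE !mxE.
have a0 : a.[0] = 1.
  by have := congr1 (fun M : 'M[k]_n.+1 => M ord0 ord0) hPhi.1; rewrite /= !mxE.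
pose Q := \prod_(z <- s) (b - z *: a).
have Q0 : Q = 0.
  apply/eqP/negPn/negP => /poly_nonzero_pt [x]; rewrite /Q horner_prod.
  rewrite prodf_seq_neq0 => /allP /(_ _ (cs x)) /=.
  by rewrite hornerD hornerN hornerZ ab subrr eqxx.
have [z zs bz] : exists2 z, z \in s & b = z *: a.
  move/eqP: Q0; rewrite /Q prodf_seq_eq0 => /hasP [z zs /= /eqP e].
  by exists z => //; apply/eqP; rewrite -subr_eq0 e.
have z0 : z != 0.
  move: zs; rewrite -root_prod_XsubC => zr; apply/eqP => e.
  have := f_equal (horner^~ z) Xs; rewrite hornerZ (rootP zr) mulr0 e.
  by rewrite hornerD hornerN hornerXn hornerC expr0n /= sub0r => /eqP; rewrite oppr_eq0 oner_eq0.
move=> t.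
have aN : a != 0 by apply/eqP => e; move: a0; rewrite e horner0 => /eqP; rewrite eq_sym oner_eq0.
have aT : a \Po ('X + t%:P) != 0.
  apply/eqP => e; have := f_equal (horner^~ (- t)) e.
  by rewrite horner_comp hornerD hornerX hornerC addNr a0 horner0 => /eqP; rewrite oner_eq0.
have [x] := poly_nonzero_pt (mulf_neq0 aN aT).
rewrite hornerM horner_comp hornerD hornerX hornerC mulf_eq0 negb_or => /andP[ax axt].
have cz y : a.[y] != 0 -> c y = z.
  by move=> ay; apply: (mulIf ay); rewrite -ab bz hornerZ.
have ct : c t = 1.
  have := cM x t; rewrite (cz _ ax) (cz _ axt) => /eqP.
  by rewrite -{1}(mulr1 z) (can_eq (mulKf z0)) eq_sym => /eqP.
by rewrite cP ct scale1r.
Qed.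

Lemma conj_eval (k : fieldType) n (P : 'M[k]_n) (Phi : 'M[{poly k}]_n) t :
  mx_eval (map_mx polyC P *m Phi *m map_mx polyC (invmx P)) t
  = P *m mx_eval Phi t *m invmx P.
Proof.
rewrite !mx_evalE !map_mxM; congr (_ *m _ *m _); apply/matrixP => i j;
by rewrite !mxE; apply: hornerC.
Qed.

Lemma conj_hom (k : fieldType) n (P : 'M[k]_n) (Phi : 'M[{poly k}]_n) :
  P \in unitmx -> Ga_hom_GL Phi ->
  Ga_hom_GL (map_mx polyC P *m Phi *m map_mx polyC (invmx P)).
Proof.
move=> Pu [h0 hM]; split; first by rewrite conj_eval h0 mulmx1 mulmxV.
move=> s t; rewrite !conj_eval hM !mulmxA; congr (_ *m _).
by rewrite -!mulmxA mulKmx.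
Qed.

Unset Implicit Arguments. Set Strict Implicit.

Theorem lemma1p7 (k : closedFieldType) (n : nat) (hn : (0 < n)%N)
  (Phi1 Phi2 : 'M[{poly k}]_n)
  (h1 : Ga_hom_GL Phi1) (h2 : Ga_hom_GL Phi2) :
  (exists P : 'M[k]_n, P \in unitmx /\
     forall t : k,
       pgl_eq (mx_eval Phi2 t) (P *m mx_eval Phi1 t *m invmx P))
  <->
  (exists Q : 'M[k]_n, Q \in unitmx /\
     forall t : k, mx_eval Phi2 t = Q *m mx_eval Phi1 t *m invmx Q).
Proof.
split.
  move=> [P [Pu HP]]; exists P; split => // t.
  case: n hn Phi1 Phi2 h1 h2 P Pu HP t => // n _ Phi1 Phi2 h1 h2 P Pu HP t.
  rewrite -conj_eval; apply: key => //; first exact: conj_hom.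
  by move=> u; rewrite conj_eval.
move=> [Q [Qu HQ]]; exists Q; split => // t; exists 1; split.
  exact: oner_neq0.
by rewrite scale1r HQ.
Qed.
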